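(* Let $m\geq 2$, $a\geq 1$ be integers and let $S_{ma}$ denote the symmetric group on $[m]\times[a]$, where $[n]=\{1,\dots,n\}$. Define embeddings $f:S_m\to S_{ma}$ by $f(\tau)(i,j)=(\tau(i),j)$ and $g:S_a\to S_{ma}$ by $g(\sigma)(i,j)=(i,\sigma(j))$. If $m=2$ define $h:(\mathbb{Z}/2\mathbb{Z})^a\to S_{2a}$ by $h(\epsilon_1,\dots,\epsilon_a)(i,j)=(i+\epsilon_j,j)$, where $i+\epsilon_j$ is taken in $\{1,2\}$ with $1+\bar0=1$, $1+\bar1=2$, $2+\bar0=2$, $2+\bar1=1$; if $m\geq 3$ set $h=f$. Then $$N_{S_{ma}}(\mathrm{im}(f))=\mathrm{im}(h)\cdot\mathrm{im}(g).$$
   Context: $N_G(H)$ denotes the normalizer of a subgroup $H$ in $G$. *)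

(* Defs.v *)
From HB Require Import structures.
From mathcomp Require Import all_boot all_fingroup.
Set Implicit Arguments. Unset Strict Implicit. Unset Printing Implicit Defensive.

(* S_{ma} is {perm 'I_m * 'I_a}; [n] = {1..n} is represented by 'I_n = {0..n-1}. *)

Section Embeddings.
Variables m a : nat.

Definition f_fun (tau : {perm 'I_m}) (p : 'I_m * 'I_a) : 'I_m * 'I_a :=
  (tau p.1, p.2).
Lemma f_fun_inj tau : injective (f_fun tau).
Proof. by move=> [i j] [k l] [/perm_inj -> ->]. Qed.
Definition f_perm (tau : {perm 'I_m}) : {perm 'I_m * 'I_a} := perm (@f_fun_inj tau).

Definition g_fun (sigma : {perm 'I_a}) (p : 'I_m * 'I_a) : 'I_m * 'I_a :=
  (p.1, sigma p.2).
Lemma g_fun_inj sigma : injective (g_fun sigma).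
Proof. by move=> [i j] [k l] [-> /perm_inj ->]. Qed.
Definition g_perm (sigma : {perm 'I_a}) : {perm 'I_m * 'I_a} := perm (@g_fun_inj sigma).

(* For m = 2, rev_ord on 'I_2 is exactly the swap 0 <-> 1 (i.e. 1 <-> 2);
   eps : {ffun 'I_a -> bool} encodes (Z/2Z)^a with true = 1bar. *)
Definition h_fun (eps : {ffun 'I_a -> bool}) (p : 'I_m * 'I_a) : 'I_m * 'I_a :=
  if eps p.2 then (rev_ord p.1, p.2) else p.
Lemma h_fun_inj eps : injective (h_fun eps).
Proof.
move=> [i j] [k l]; rewrite /h_fun /=.
case: (boolP (eps j)) => ej; case: (boolP (eps l)) => el //=.
- move=> E; have E1 := congr1 fst E; have E2 := congr1 snd E; simpl in E1, E2.
  by rewrite -(rev_ordK i) E1 rev_ordK E2.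
- by case=> _ E; subst l; rewrite (negPf el) in ej.
- by case=> _ E; subst l; rewrite (negPf ej) in el.
Qed.
Definition h_perm (eps : {ffun 'I_a -> bool}) : {perm 'I_m * 'I_a} := perm (@h_fun_inj eps).

Definition im_f : {set {perm 'I_m * 'I_a}} := [set f_perm tau | tau : {perm 'I_m}].
Definition im_g : {set {perm 'I_m * 'I_a}} := [set g_perm sigma | sigma : {perm 'I_a}].
Definition im_h : {set {perm 'I_m * 'I_a}} :=
  if m == 2 then [set h_perm eps | eps : {ffun 'I_a -> bool}] else im_f.
End Embeddings.

(* Main.v *)
Require Import Defs.
From mathcomp Require Import all_boot all_fingroup.
From mathcomp Require Import zify.
Set Implicit Arguments. Unset Strict Implicit. Unset Printing Implicit Defensive.

Lemma I2 (u v w : 'I_2) : u != w -> v != w -> u = v.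
Proof.
move: u v w => [[|[|?]] ?] [[|[|?]] ?] [[|[|?]] ?] //=; rewrite ?eqE /=;
  try (by move=> *; apply/val_inj); by [].
Qed.

Lemma rev_neq (u : 'I_2) : rev_ord u != u.
Proof. by case: u => [[|[|?]] ?]; rewrite // eqE. Qed.

Lemma notin_ex m (A : {set 'I_m}) : #|A| < m -> exists z, z \notin A.
Proof.
move=> h; have: 0 < #|~: A|.
  have := cardsC A; rewrite card_ord; lia.
by case/card_gt0P => z; rewrite inE => zA; exists z.
Qed.

Lemma key m (hm : 3 <= m) (r1 r2 : {perm 'I_m}) :
  (forall tau : {perm 'I_m}, exists tau' : {perm 'I_m},
     forall l, r1 (tau l) = tau' (r1 l) /\ r2 (tau l) = tau' (r2 l)) ->
  forall i, r1 i = r2 i.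
Proof.
move=> H i; apply/eqP; apply/negPn/negP => ne.
have claim : forall k, k != i -> r1 i = r2 k.
  move=> k ki; have [t' Ht] := H (tperm i k).
  set l := (r2^-1)%g (r1 i); have rl : r2 l = r1 i by rewrite permKV.
  case: (eqVneq l k) => [<-|lk]; first by rewrite rl.
  exfalso; case: (eqVneq l i) => [li|li].
    by move: ne; rewrite -rl li eqxx.
  have := (Ht l).2; rewrite tpermD 1?eq_sym // rl => e1.
  have := (Ht i).1; rewrite tpermL -e1 => /perm_inj e2.
  by rewrite e2 eqxx in ki.
have : #|[set i]| < m by rewrite cards1; lia.
move/notin_ex=> [k kn].
have : #|[set i; k]| < m by rewrite cards2; case: (i != k); lia.
move/notin_ex=> [k' kn'].
move: kn kn'; rewrite !inE negb_or => ki /andP [k'i k'k].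
have := claim k ki; rewrite (claim k' k'i) => /perm_inj e.
by rewrite e eqxx in k'k.
Qed.

Section S.
Variables m a : nat.
Notation T := ('I_m * 'I_a)%type.

Definition Cn (x : {perm T}) := forall tau : {perm 'I_m}, exists tau' : {perm 'I_m},
  forall p, x (f_perm a tau p) = f_perm a tau' (x p).

Lemma fE (tau : {perm 'I_m}) p : f_perm a tau p = (tau p.1, p.2). Proof. by rewrite permE. Qed.
Lemma gE (s : {perm 'I_a}) p : g_perm m s p = (p.1, s p.2). Proof. by rewrite permE. Qed.

Lemma Cn_norm x : Cn x -> x \in 'N(im_f m a)%g.
Proof.
move=> Cx; rewrite inE; apply/subsetP => y /imsetP [z /imsetP [tau _ ->] ->].
have [tau' H] := Cx tau.
apply/imsetP; exists tau' => //.
by apply/permP => p; rewrite conjgE !permM H permKV.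
Qed.

Lemma norm_Cn x : x \in 'N(im_f m a)%g -> Cn x.
Proof.
move=> Nx tau; have E := normP Nx.
have: (f_perm a tau ^ x)%g \in im_f m a.
  by rewrite -E memJ_conjg; apply/imsetP; exists tau.
case/imsetP => tau' _ Ht; exists tau' => p.
have := congr1 (fun s : {perm T} => s (x p)) Ht.
by rewrite /= conjgE !permM permK.
Qed.

Lemma Cn_col x : Cn x -> forall i k j, (x (i,j)).2 = (x (k,j)).2.
Proof.
move=> Cx i k j; have [t' H] := Cx (tperm i k).
by have := H (i,j); rewrite !fE /= tpermL => ->.
Qed.

Lemma col_inj x : x \in 'N(im_f m a)%g -> forall i, injective (fun j => (x (i,j)).2).
Proof.
move=> Nx i j j' /= E.
have CV := norm_Cn (groupVr Nx : (x^-1)%g \in _).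
have e1 : x (i,j) = ((x (i,j)).1, (x (i,j)).2) by case: (x (i,j)).
have e2 : x (i,j') = ((x (i,j')).1, (x (i,j')).2) by case: (x (i,j')).
have := Cn_col CV (x (i,j)).1 (x (i,j')).1 (x (i,j)).2.
by rewrite -e1 E -e2 !permK.
Qed.

Lemma rho_inj x : Cn x -> forall j, injective (fun i => (x (i,j)).1).
Proof.
move=> Cx j i k /= E.
suff: x (i,j) = x (k,j) by move/perm_inj; case.
by rewrite [x (i,j)]surjective_pairing [x (k,j)]surjective_pairing E (Cn_col Cx i k j).
Qed.
End S.

Theorem lemma4p3 (m a : nat) (hm : 2 <= m) (ha : 1 <= a) :
  ('N(im_f m a) = im_h m a * im_g m a)%g.
Proof.
apply/setP => x; apply/idP/idP.
- move=> Nx; have Cx := norm_Cn Nx.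
  have m0 : 0 < m by lia.
  pose i0 : 'I_m := Ordinal m0.
  pose sg := perm (col_inj Nx (i:=i0)).
  have hinj : injective (fun p : 'I_m * 'I_a => ((x p).1, p.2)).
    move=> [i j] [k l] /= [E1 E2]; subst l.
    by congr pair; apply: (rho_inj Cx E1).
  pose hp := perm hinj.
  have hx : x = (hp * g_perm m sg)%g.
    apply/permP => -[i j]; rewrite permM gE !permE /=.
    by rewrite (Cn_col Cx i0 i j) -surjective_pairing.
  rewrite hx; apply: mem_mulg; last by apply/imsetP; exists sg.
  rewrite /im_h; case: eqP => [m2|mn2].
  + subst m.
    apply/imsetP; exists [ffun j => (x (ord0, j)).1 != ord0] => //.
    apply/permP => -[i j]; rewrite !permE /h_fun /= ffunE.
    have rj := rho_inj Cx (j:=j).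
    have nij : forall k, k != ord0 -> (x (k,j)).1 != (x (ord0,j)).1.
      by move=> k kn; apply/negP => /eqP /rj /eqP; apply/negP.
    case: ifP => c; congr pair.
    * case: (eqVneq i ord0) => [->|iz].
        by apply: (I2 (w:=ord0)) => //; exact: rev_neq.
      apply: (I2 (w:=(x (ord0,j)).1)); first exact: nij.
      have -> : rev_ord i = ord0 by apply: (I2 (w:=i)); rewrite ?rev_neq // eq_sym.
      by rewrite eq_sym.
    * move/negbFE/eqP: c => c.
      case: (eqVneq i ord0) => [->|iz]; first exact: c.
      by apply: (I2 (w:=ord0)) => //; rewrite -[X in _ != X]c; exact: nij.
  + have m3 : 3 <= m by case: m hm mn2 {Nx Cx m0 i0 sg hinj hp hx x} => [|[|[|]]].
    have a0 : 0 < a by lia.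
    pose j0 : 'I_a := Ordinal a0.
    apply/imsetP; exists (perm (rho_inj Cx (j:=j0))) => //.
    apply/permP => -[i j]; rewrite !permE /f_fun /=; congr pair.
    suff K : forall tau : {perm 'I_m}, exists tau' : {perm 'I_m}, forall l,
      perm (rho_inj Cx (j:=j0)) (tau l) = tau' (perm (rho_inj Cx (j:=j0)) l) /\
      perm (rho_inj Cx (j:=j)) (tau l) = tau' (perm (rho_inj Cx (j:=j)) l).
      by have := key m3 K i; rewrite !permE.
    move=> tau; have [t' Ht] := Cx tau; exists t' => l; rewrite !permE.
    by split; [have := Ht (l, j0) | have := Ht (l, j)]; rewrite !fE /= => ->.
- case/mulsgP => y z yH zG ->; apply: groupM.
  + move: yH; rewrite /im_h; case: eqP => [m2|_].
    * subst m; case/imsetP => e _ ->; apply: Cn_norm => tau; exists tau => -[i j].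
      rewrite !permE /h_fun /f_fun /=; case: (e j) => //=; congr pair.
      apply: (I2 (w:=tau i)); first exact: rev_neq.
      by rewrite (inj_eq perm_inj) rev_neq.
    * case/imsetP => r _ ->; apply: Cn_norm => tau; exists (r^-1 * tau * r)%g => -[i j].
      by rewrite !fE /= !permM permK.
  + case/imsetP: zG => s _ ->; apply: Cn_norm => tau; exists tau => -[i j].
    by rewrite !permE.
Qed.
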